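(* For each $\underline y\in\mathcal F$ there exists $\underline x\in\mathcal F_0$ such that (1) $x_{j,k}\le y_{j,k}$ for all $k\in Q$ and $j\in\tilde V\setminus\{k,0\}$, and hence (2) $\sum_{j\in\tilde R}c_jx_j\le\sum_{j\in\tilde R}c_jy_j$.
   Context: Let $G=(V,E)$ be a finite undirected graph with $V=Q\cup R\cup B$ (pairwise disjoint), where $Q$ is the set of sources, $R$ the set of potential relay locations and $B$ the set of potential sink locations; let $h_{\max}$ be a positive integer and $c_s,c_r\ge0$. Form the augmented graph $\tilde G=(\tilde V,\tilde E)$ with $\tilde V=V\cup\{0\}$, where $0$ is a new vertex (virtual sink), and $\tilde E=E\cup\{\{0,b\}:b\in B\}$. Let $\tilde R=R\cup B$ with node costs $c_j=c_r$ for $j\in R$ and $c_j=c_s$ for $j\in B$. For a source $k\in Q$, a node cut for $k$ is a set $\gamma\subseteq\tilde V\setminus\{k,0\}$ whose deletion disconnects $k$ from $0$ in $\tilde G$; it is minimal if no proper subset is a node cut; $\Gamma^k$ denotes the set of minimal node cuts for $k$. A vector $\underline y=((y_{j,k})_{k\in Q,\,j\in\tilde V\setminus\{k,0\}},(y_j)_{j\in\tilde R})$ belongs to $\mathcal F$ iff: (i) $\sum_{j\in\gamma}y_{j,k}\ge1$ for all $\gamma\in\Gamma^k$, $k\in Q$; (ii) $y_j\ge y_{j,k}$ for all $j\in\tilde R$, $k\in Q$; (iii) $\sum_{j\in\tilde V\setminus\{k,0\}}y_{j,k}\le h_{\max}$ for all $k\in Q$; (iv) all $y_{j,k},y_j\in\{0,1\}$.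 For $k\in Q$ let $\mathcal P'_k$ be the set of paths in $\tilde G$ from $k$ to $0$ with at most $h_{\max}+1$ edges, and let $\mathcal U_0$ be the set of tuples $\underline g=(p_k)_{k\in Q}$ with $p_k\in\mathcal P'_k$. For $\underline g\in\mathcal U_0$ define $\underline x(\underline g)$ by $x_{j,k}=1$ if $j$ is a vertex of $p_k$ and $0$ otherwise ($k\in Q$, $j\in\tilde V\setminus\{k,0\}$), and $x_j=1$ if $x_{j,k}=1$ for some $k\in Q$ and $0$ otherwise ($j\in\tilde R$). Let $\mathcal F_0=\{\underline x(\underline g):\underline g\in\mathcal U_0\}$. *)

(* Defs.v *)
From HB Require Import structures.
From mathcomp Require Import all_boot all_order all_algebra.
Set Implicit Arguments. Unset Strict Implicit. Unset Printing Implicit Defensive.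
Import Order.TTheory GRing.Theory Num.Theory.

Section Defs.
Variables (T : finType) (Q Rs B : {set T}) (e : rel T) (hmax : nat).

(* Augmented vertex set V~ = option T : [None] is the virtual sink 0,
   [Some v] is the vertex v of V. *)
Definition aedge : rel (option T) := fun u v =>
  match u, v with
  | Some a, Some b => e a b
  | None, Some b => b \in B
  | Some a, None => a \in B
  | None, None => false
  end.

Definition Rt : {set T} := Rs :|: B.

Definition is_node_cut (k : T) (gam : {set option T}) : bool :=
  [&& Some k \notin gam, None \notin gam &
   ~~ connect [rel u v | [&& aedge u v, u \notin gam & v \notin gam]]
        (Some k) None].

Definition is_min_node_cut (k : T) (gam : {set option T}) : bool :=
  is_node_cut k gam &&
  [forall gam' : {set option T}, (gam' \proper gam) ==> ~~ is_node_cut k gam'].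

Definition jdom (k : T) (j : option T) : bool := (j != Some k) && (j != None).

(* The feasible set F: y_{j,k} is [yjk k j], y_j is [yj j]. *)
Definition in_F (yjk : T -> option T -> nat) (yj : T -> nat) : Prop :=
  (forall k gam, k \in Q -> is_min_node_cut k gam ->
     1 <= \sum_(j in gam) yjk k j)%N /\
  (forall j k, j \in Rt -> k \in Q -> yjk k (Some j) <= yj j)%N /\
  (forall k, k \in Q -> \sum_(j | jdom k j) yjk k j <= hmax)%N /\
  (forall k j, k \in Q -> jdom k j -> yjk k j <= 1)%N /\
  (forall j, j \in Rt -> yj j <= 1)%N.

Definition in_Pprime (k : T) (p : seq (option T)) : bool :=
  if p is v :: s then
    [&& v == Some k, path aedge v s, last v s == None, uniq p &
        (size s <= hmax.+1)%N]
  else false.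

Definition in_U0 (g : T -> seq (option T)) : Prop :=
  forall k, k \in Q -> in_Pprime k (g k).

Definition xjk_of (g : T -> seq (option T)) (k : T) (j : option T) : nat :=
  (j \in g k).
Definition xj_of (g : T -> seq (option T)) (j : T) : nat :=
  [exists k in Q, xjk_of g k (Some j) == 1%N].

Definition in_F0 (xjk : T -> option T -> nat) (xj : T -> nat) : Prop :=
  exists g, in_U0 g /\
    (forall k j, k \in Q -> jdom k j -> xjk k j = xjk_of g k j) /\
    (forall j, j \in Rt -> xj j = xj_of g j).

End Defs.

Definition cost (K : numDomainType) (T : finType) (Rs : {set T}) (cs cr : K)
  (j : T) : K := if j \in Rs then cr else cs.

(* Main.v *)
Require Import Defs.
From HB Require Import structures.
From mathcomp Require Import all_boot all_order all_algebra.
Import Order.TTheory GRing.Theory Num.Theory.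

Lemma path_notin (T : finType) (Z : {set T}) (r : rel T) x p :
  (forall u v, r u v -> v \notin Z) -> path r x p -> all (fun v => v \notin Z) p.
Proof.
move=> hr; elim: p x => [|a p IH] x //= /andP[ra pa].
by rewrite (hr _ _ ra) (IH _ pa).
Qed.

Lemma key (T : finType) (Q Rs B : {set T}) (e : rel T) (hmax : nat)
  (yjk : T -> option T -> nat) (yj : T -> nat) :
  in_F Q Rs B e hmax yjk yj -> forall k, k \in Q ->
  exists p, in_Pprime B e hmax k p && all (fun j => jdom k j ==> (0 < yjk k j)%N) p.
Proof.
case=> [h1 [h2 [h3 [h4 h5]]]] k kQ.
pose Z : {set option T} := [set j | jdom k j && (yjk k j == 0%N)].
pose r := [rel u v | [&& aedge B e u v, u \notin Z & v \notin Z]].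
have hc : connect r (Some k) None.
  apply/negPn/negP => nc.
  have nck : is_node_cut B e k Z.
    by rewrite /is_node_cut !inE /jdom !eqxx /=; exact: nc.
  have [A minA sAZ] := minset_exists nck.
  have /minsetP [cA mA] := minA.
  have : is_min_node_cut B e k A.
    rewrite /is_min_node_cut cA /=; apply/forallP => C; apply/implyP => pC.
    apply/negP => cC; have := mA C cC (proper_sub pC).
    by move=> eC; rewrite eC properxx in pC.
  move/(h1 k A kQ); rewrite big1 // => j jA.
  by have := subsetP sAZ j jA; rewrite inE => /andP[_ /eqP].
case/connectP: hc => p0 pp0 lp0.
move: lp0; case: (shortenP pp0) => p pp up sub lp.
exists (Some k :: p).
have hall : all (fun v => v \notin Z) p.
  by apply: (@path_notin _ Z r _ _ _ pp) => u v /and3P[].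
apply/andP; split; last first.
  rewrite /= /jdom eqxx /=; apply/allP => j jp; apply/implyP => jd.
  have := allP hall j jp; rewrite inE; move: jd; rewrite /jdom => -> /=; by rewrite lt0n.
rewrite /in_Pprime eqxx up -lp eqxx /=.
rewrite (sub_path _ pp) /=; last by move=> u v /and3P[].
have pn : p != [::] by case: p lp {pp up sub hall} => //.
case/lastP: p pn pp up sub hall lp => [//|q z] _ _ up _ hall.
rewrite last_rcons => zN; subst z.
rewrite size_rcons ltnS.
have uq : uniq (Some k :: q).
  by move: up; rewrite /= mem_rcons inE rcons_uniq !negb_or => /and3P[/andP[_ ->] _ ->].
have qd : forall j, j \in q -> jdom k j.
  move=> j jq; rewrite /jdom; apply/andP; split.
    by apply/eqP => ejk; move: uq; rewrite /= -ejk jq.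
  by apply/eqP => ejn; move: up; rewrite /= rcons_uniq -ejn jq andbF.
have qy : forall j, j \in q -> (0 < yjk k j)%N.
  move=> j jq; have := allP hall j; rewrite mem_rcons inE jq orbT => /(_ isT).
  by rewrite inE qd //= lt0n.
apply: leq_trans (h3 k kQ).
rewrite (bigID (fun j => j \in q)) /=.
apply: leq_trans (leq_addr _ _).
apply: (@leq_trans (\sum_(j | jdom k j && (j \in q)) 1)%N).
  rewrite sum1_card.
  have -> : #|[pred j | jdom k j && (j \in q)]| = #|q|.
    by apply: eq_card => j; rewrite inE; case jq: (j \in q); rewrite ?andbF ?qd.
  by move: uq => /= /andP[_ /card_uniqP ->].
by apply: leq_sum => j /andP[_ /qy].
Qed.

Theorem lemma3 (K : realFieldType) (T : finType) (Q Rs B : {set T})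
  (e : rel T) (hmax : nat) (cs cr : K)
  (hQR : [disjoint Q & Rs]) (hQB : [disjoint Q & B]) (hRB : [disjoint Rs & B])
  (hcover : Q :|: Rs :|: B = [set: T])
  (hsym : symmetric e) (hh : (0 < hmax)%N) (hcs : (0 <= cs)%R) (hcr : (0 <= cr)%R)
  (yjk : T -> option T -> nat) (yj : T -> nat) :
  in_F Q Rs B e hmax yjk yj ->
  exists (xjk : T -> option T -> nat) (xj : T -> nat),
    [/\ in_F0 Q Rs B e hmax xjk xj,
        (forall k j, k \in Q -> jdom k j -> (xjk k j <= yjk k j)%N) &
        (\sum_(j in Rt Rs B) cost Rs cs cr j * (xj j)%:R
           <= \sum_(j in Rt Rs B) cost Rs cs cr j * (yj j)%:R)%R].
Proof.
move=> hF.
have hk := @key _ _ _ _ _ _ _ _ hF.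
have ex : forall k, exists p, (k \in Q) ==>
   (in_Pprime B e hmax k p && all (fun j => jdom k j ==> (0 < yjk k j)%N) p).
  move=> k; case kQ: (k \in Q); last by exists [::].
  by have [p hp] := hk k kQ; exists p.
pose g k := xchoose (ex k).
have gP : forall k, k \in Q ->
   in_Pprime B e hmax k (g k) && all (fun j => jdom k j ==> (0 < yjk k j)%N) (g k).
  by move=> k kQ; exact: (implyP (xchooseP (ex k)) kQ).
have hx : forall k j, k \in Q -> jdom k j -> (xjk_of g k j <= yjk k j)%N.
  move=> k j kQ jd; rewrite /xjk_of; case jg: (j \in g k) => //=.
  have /andP[_ /allP /(_ j jg)] := gP k kQ.
  by rewrite jd.
case: hF => [_ [h2 _]].
exists (xjk_of g), (xj_of Q g); split.
- exists g; split; first by move=> k kQ; case/andP: (gP k kQ).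
  by split.
- exact: hx.
apply: ler_sum => j jR.
have c0 : (0 <= cost Rs cs cr j)%R by rewrite /cost; case: ifP.
apply: ler_wpM2l => //; rewrite ler_nat /xj_of.
case: existsP => [[k /andP[kQ /eqP hk1]]|_] //=.
apply: leq_trans (h2 j k jR kQ).
rewrite -hk1; apply: hx => //.
rewrite /jdom andbT; apply/eqP => -[ejk]; subst j.
by move: jR; rewrite /Rt inE (disjointFr hQR kQ) (disjointFr hQB kQ).
Qed.
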